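(* Let $r\geq 2$ be an integer, and let $G$ be a $K_{r+1}$-free finite simple graph of order $n$ without isolated vertices. If $c=\lceil(\delta(G)+1)/2\rceil$, then $$\gamma_{st}(G)\geq \frac{r}{r-1}\left(-(c-1)+\sqrt{(c-1)^2+4\,\frac{r-1}{r}\,c\,n}\right)-n.$$
   Context: A graph is $K_p$-free if it does not contain the complete graph $K_p$ as a subgraph. $\delta(G)$ is the minimum degree. For a vertex $v$, $N(v)$ is its open neighborhood. A signed total dominating function (STDF) of $G$ is a function $f:V(G)\to\{-1,1\}$ such that $\sum_{u\in N(v)}f(u)\geq 1$ for every vertex $v$; the signed total domination number $\gamma_{st}(G)$ is the minimum of $\sum_{v\in V(G)}f(v)$ over all STDFs $f$ of $G$. *)

(* Defs.v *)
From mathcomp Require Import all_boot all_order all_algebra.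
Set Implicit Arguments. Unset Strict Implicit. Unset Printing Implicit Defensive.
Import Order.TTheory GRing.Theory Num.Theory.
Local Open Scope ring_scope.

Definition simple_graph (T : finType) (e : rel T) : Prop :=
  symmetric e /\ irreflexive e.

Definition nbhd (T : finType) (e : rel T) (v : T) : {set T} := [set u | e v u].

Definition deg (T : finType) (e : rel T) (v : T) : nat := #|nbhd e v|.

(* minimum degree; for an empty vertex set this is (by convention) 0 *)
Definition min_deg (T : finType) (e : rel T) : nat :=
  (\big[minn/#|T|]_(v : T) deg e v)%N.

Definition no_isolated (T : finType) (e : rel T) : Prop :=
  forall v : T, (0 < deg e v)%N.

Definition Kp_free (T : finType) (e : rel T) (p : nat) : Prop :=
  ~ exists S : {set T}, #|S| = p :> nat /\ {in S &, forall x y, x != y -> e x y}.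

(* a {-1,1}-valued function, encoded by its sign: true ↦ 1, false ↦ -1 *)
Definition sgv (b : bool) : int := if b then 1 else -1.

Definition weight (T : finType) (f : {ffun T -> bool}) : int :=
  \sum_(v : T) sgv (f v).

Definition is_STDF (T : finType) (e : rel T) (f : {ffun T -> bool}) : bool :=
  [forall v : T, 1 <= \sum_(u in nbhd e v) sgv (f u)].

(* signed total domination number: minimum weight of an STDF
   (the arg min is over STDFs; meaningful when the constant-1 function is an STDF,
   i.e. when G has no isolated vertices) *)
Definition gamma_st (T : finType) (e : rel T) : int :=
  weight (Order.arg_min [ffun => true] (is_STDF e) (@weight T)).

(* Main.v *)
Require Import Defs.
From mathcomp Require Import all_boot all_order all_algebra zify ring lra.
Import Order.TTheory GRing.Theory Num.Theory.
Set Implicit Arguments. Unset Strict Implicit.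

Definition clique (T : finType) (e : rel T) (K : {set T}) : bool :=
  [forall x in K, forall y in K, (x != y) ==> e x y].

Lemma sum_le_pred (T : finType) (A : {set T}) (g : T -> bool) v :
  v \in A -> ~~ g v -> (\sum_(u in A) g u <= #|A| - 1)%N.
Proof.
move=> vA gv; rewrite (bigD1 v) //= (negbTE gv) add0n (cardD1 v A) vA add1n subSS subn0.
apply: (@leq_trans (\sum_(u in A | u != v) 1)%N); first by apply: leq_sum => i _; exact: leq_b1.
rewrite sum1_card; apply: eq_leq; apply: eq_card => i; rewrite !inE andbC //.
Qed.

Lemma bigminn_le (T : finType) (x : nat) (F : T -> nat) j :
  (\big[minn/x]_(i : T) F i <= F j)%N.
Proof.
have: forall s, j \in s -> (\big[minn/x]_(i <- s) F i <= F j)%N.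
  elim=> // a s IH; rewrite inE big_cons => /orP[/eqP->|/IH h].
    exact: geq_minl.
  by rewrite geq_min h orbT.
by apply; rewrite mem_index_enum.
Qed.

Lemma clique_le (T : finType) (e : rel T) r K :
  Kp_free e r.+1 -> clique e K -> (#|K| <= r)%N.
Proof.
move=> Hf cK; rewrite leqNgt; apply/negP => Hr; apply: Hf.
pose s := take r.+1 (enum K).
have us : uniq s by rewrite take_uniq // enum_uniq.
exists [set x in s]; split.
  rewrite cardsE (card_uniqP us) size_take.
  have -> : size (enum K) = #|K| by rewrite cardE.
  by case: ltnP => // h; apply/eqP; rewrite eqn_leq h.
move=> x y; rewrite !inE => /mem_take; rewrite mem_enum => xK /mem_take; rewrite mem_enum => yK xy.
by move/forall_inP: cK => /(_ x xK) /forall_inP /(_ y yK) /implyP /(_ xy).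
Qed.

Lemma arith (r a b d q s : nat) : (a <= s * (s - 1))%N -> (b <= q * (s - 1))%N ->
  (r * d <= (r - 1) * q ^ 2)%N -> (s <= r)%N -> (0 < s)%N ->
  (r * (a + b + (b + d)) <= (r - 1) * (q + s) ^ 2)%N.
Proof.
move=> KK SK IH sr s0.
have h1 : (r * (s - 1) <= (r - 1) * s)%N.
  rewrite mulnBr mulnBl muln1 mul1n mulnC; apply: leq_sub2l => //.
have h2 : (r * (s - 1) * (s + 2 * q) <= (r - 1) * s * (s + 2 * q))%N by apply: leq_mul.
set t := (s - 1)%N in KK SK h1 h2 *; set u := (r - 1)%N in IH h1 h2 *.
have ra : (r * a <= r * (s * t))%N by rewrite leq_mul2l KK orbT.
have rb : (r * b <= r * (q * t))%N by rewrite leq_mul2l SK orbT.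
clearbody t u. lia.
Qed.

Lemma turan (T : finType) (e : rel T) r :
  symmetric e -> irreflexive e -> (forall K, clique e K -> (#|K| <= r)%N) ->
  forall S : {set T},
  (r * \sum_(v in S) \sum_(u in S) e v u <= (r - 1) * #|S| ^ 2)%N.
Proof.
move=> Hsym Hirr Hcl S.
elim: {S}#|S|.+1 {-2}S (ltnSn #|S|) => // k IH S leSk.
have [->|[x xS]] := set_0Vmem S.
  by rewrite big_set0 muln0.
pose Pc := [pred A : {set T} | (A \subset S) && clique e A].
have PC : Pc [set x].
  rewrite /= sub1set xS /=; apply/forall_inP => a; rewrite inE => /eqP->.
  by apply/forall_inP => b; rewrite inE => /eqP->; rewrite eqxx.
have [K maxK xK] := maxset_exists PC.
have /andP[KS cK] := maxsetp maxK.
have sK := Hcl _ cK.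
have s1 : (0 < #|K|)%N by apply/card_gt0P; exists x; rewrite -sub1set.
pose S' := S :\: K.
have cS' : #|S| = (#|S'| + #|K|)%N.
  by rewrite /S' -(cardsID K S) (setIidPr KS) addnC.
have IHS' : (r * \sum_(v in S') \sum_(u in S') e v u <= (r - 1) * #|S'| ^ 2)%N.
  apply: IH; move: leSk s1; rewrite cS'; lia.
have split2 : forall F : T -> nat, (\sum_(v in S) F v = \sum_(v in K) F v + \sum_(v in S') F v)%N.
  by move=> F; rewrite (big_setID K) /= (setIidPr KS).
have E : (\sum_(v in S) \sum_(u in S) e v u =
   \sum_(v in K) \sum_(u in K) e v u + \sum_(v in K) \sum_(u in S') e v u +
   (\sum_(v in S') \sum_(u in K) e v u + \sum_(v in S') \sum_(u in S') e v u))%N.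
  rewrite split2; congr (_ + _); rewrite -big_split /=; apply: eq_bigr => v _; exact: split2.
have KK : (\sum_(v in K) \sum_(u in K) e v u <= #|K| * (#|K| - 1))%N.
  rewrite -sum_nat_const; apply: leq_sum => v vK; apply: (sum_le_pred (g := e v) vK); by rewrite Hirr.
have SK : (\sum_(v in S') \sum_(u in K) e v u <= #|S'| * (#|K| - 1))%N.
  rewrite -sum_nat_const; apply: leq_sum => v vS'.
  have [u uK nevu] : exists2 u, u \in K & ~~ e v u.
    case: (boolP [forall u in K, e v u]) => [allv|].
      exfalso.
      have P2 : Pc (v |: K).
        rewrite /= subUset sub1set KS andbT.
        move: vS'; rewrite !inE => /andP[vK vS]; rewrite vS /=.
        apply/forall_inP => a; rewrite !inE => /orP[/eqP->|aK];
          apply/forall_inP => b; rewrite !inE => /orP[/eqP->|bK]; apply/implyP => ab.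
        - by rewrite eqxx in ab.
        - exact: (forall_inP allv).
        - by rewrite Hsym; exact: (forall_inP allv).
        - by move/forall_inP: cK => /(_ a aK) /forall_inP /(_ b bK) /implyP /(_ ab).
      have := maxsetsup maxK P2 (subsetUr _ _) => eqK.
      move: vS'; rewrite !inE -eqK !inE eqxx; done.
    move/forallPn => [u]; rewrite negb_imply => /andP[uK nu]; by exists u.
  exact: (sum_le_pred (g := e v) uK nevu).
have KS' : (\sum_(v in K) \sum_(u in S') e v u = \sum_(v in S') \sum_(u in K) e v u)%N.
  rewrite exchange_big /=; apply: eq_bigr => v _; apply: eq_bigr => u _; by rewrite Hsym.
rewrite E KS' cS'.
move: KK SK IHS' sK s1.
set a := (\sum_(v in K) _)%N; set b := (\sum_(v in S') \sum_(u in K) _)%N.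
set d := (\sum_(v in S') \sum_(u in S') _)%N.
set q := #|S'|; set s := #|K|.
move=> KK SK IHS' sK s1.
exact: arith.
Qed.
Lemma card_nbhdI (T : finType) (e : rel T) v (A : {set T}) :
  #|nbhd e v :&: A| = (\sum_(u in A) e v u)%N.
Proof.
rewrite -big_mkcondr /= sum1_card; apply: eq_card => u; rewrite !inE andbC.
by [].
Qed.

Lemma key (T : finType) (e : rel T) r (f : {ffun T -> bool}) :
  simple_graph e -> Kp_free e r.+1 -> is_STDF e f ->
  (r * (#|~: [set v | f v]| * (min_deg e).+2./2 + #|[set v | f v]|)
     <= (r - 1) * #|[set v | f v]| ^ 2)%N.
Proof.
move=> [Hsym Hirr] Hf /forallP Hs.
set P := [set v | f v]; set c := (min_deg e).+2./2.
have hv : forall v, (#|nbhd e v :&: ~: P| + 1 <= #|nbhd e v :&: P|)%N.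
  move=> v; have := Hs v; rewrite (big_setID P) /=.
  rewrite (eq_bigr (fun _ => 1%R)); last by move=> u; rewrite !inE => /andP[_ ->].
  rewrite [X in (_ + X)%R](eq_bigr (fun _ => (-1)%R)); last first.
    by move=> u; rewrite !inE => /andP[nP _]; rewrite /sgv (negbTE nP).
  rewrite !sumr_const setDE mulNrn !natz => h.
  lia.
have hc : forall v, (c <= #|nbhd e v :&: P|)%N.
  move=> v; have := hv v; have := cardsID P (nbhd e v); rewrite setDE.
  have : (min_deg e <= deg e v)%N by exact: bigminn_le.
  rewrite /deg /c; lia.
have A1 : (#|~: P| * c <= \sum_(v in ~: P) \sum_(u in P) e v u)%N.
  rewrite -sum_nat_const; apply: leq_sum => v _; rewrite -card_nbhdI; exact: hc.
have A2 : (\sum_(v in ~: P) \sum_(u in P) e v u = \sum_(v in P) \sum_(u in ~: P) e v u)%N.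
  rewrite exchange_big /=; apply: eq_bigr => v _; apply: eq_bigr => u _; by rewrite Hsym.
have A3 : (\sum_(v in P) \sum_(u in ~: P) e v u + #|P| <= \sum_(v in P) \sum_(u in P) e v u)%N.
  rewrite -[X in (_ + X <= _)%N]muln1 -sum_nat_const -big_split /=.
  apply: leq_sum => v _; rewrite -!card_nbhdI; exact: hv.
have A4 := turan Hsym Hirr (fun K => clique_le Hf) P.
apply: leq_trans A4; rewrite leq_mul2l; apply/orP; right.
apply: leq_trans A3; rewrite leq_add2r -A2 //.
Qed.
Local Open Scope ring_scope.

Lemma real_part (R : rcfType) (p m c rr : R) :
  2 <= rr -> 1 <= c -> 0 <= p -> 0 <= m ->
  rr * (m * c + p) <= (rr - 1) * p ^+ 2 ->
  rr / (rr - 1) * (- (c - 1) + Num.sqrt ((c - 1) ^+ 2 + 4 * ((rr - 1) / rr) * c * (p + m))) - (p + m)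
  <= p - m.
Proof.
move=> r2 c1 p0 m0 K.
have a0 : 0 < rr - 1 by lra.
have rr0 : 0 < rr by lra.
set a := rr - 1 in a0 K *.
set t := 2 * p * a / rr + (c - 1).
have t0 : 0 <= t.
  rewrite /t addr_ge0 //; last by lra.
  apply: divr_ge0; last exact: ltW.
  apply: mulr_ge0; last exact: ltW.
  by apply: mulr_ge0 => //; lra.
have Dt : (c - 1) ^+ 2 + 4 * (a / rr) * c * (p + m) <= t ^+ 2.
  rewrite -subr_ge0.
  have -> : t ^+ 2 - ((c - 1) ^+ 2 + 4 * (a / rr) * c * (p + m)) =
     4 * a / rr ^+ 2 * (a * p ^+ 2 - rr * (m * c + p)).
    rewrite /t /a; field; by rewrite gt_eqF.
  apply: mulr_ge0; last by rewrite subr_ge0.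
  apply: divr_ge0; last exact: exprn_ge0 (ltW rr0).
  apply: mulr_ge0; [lra | exact: ltW].
have sq : Num.sqrt ((c - 1) ^+ 2 + 4 * (a / rr) * c * (p + m)) <= t.
  by rewrite -(ger0_norm t0) -sqrtr_sqr ler_wsqrtr.
have : rr / a * (- (c - 1) + Num.sqrt ((c - 1) ^+ 2 + 4 * (a / rr) * c * (p + m)))
      <= rr / a * (2 * p * a / rr).
  apply: ler_wpM2l; first by rewrite divr_ge0 ?ltW.
  by rewrite addrC lerBlDr.
have -> : rr / a * (2 * p * a / rr) = 2 * p by field; rewrite !gt_eqF.
move=> h; lra.
Qed.

Theorem theorem3p7 (R : rcfType) (r : nat) (T : finType) (e : rel T) :
  (2 <= r)%N ->
  simple_graph e ->
  (0 < #|T|)%N ->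
  no_isolated e ->
  Kp_free e r.+1 ->
  let n : R := (#|T|)%:R in
  let c : R := ((min_deg e).+2./2)%:R in
  let rr : R := r%:R in
  (gamma_st e)%:~R >=
    rr / (rr - 1) * (- (c - 1) + Num.sqrt ((c - 1) ^+ 2 + 4 * ((rr - 1) / rr) * c * n)) - n.
Proof.
move=> r2 Hs n0 noiso Hf; rewrite /=.
have Htrue : is_STDF e [ffun=> true].
  apply/forallP => v; rewrite (eq_bigr (fun _ => 1)); last by move=> u _; rewrite ffunE.
  by rewrite sumr_const ler1n; exact: noiso.
rewrite /gamma_st; case: arg_minP => // f Hf' _.
have K := key Hs Hf Hf'.
set P := [set v | f v] in K.
have cT : #|T| = (#|P| + #|~: P|)%N by rewrite cardsC.
have W : weight f = #|P|%:Z - #|~: P|%:Z.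
  rewrite /weight (_ : \sum_(v : T) _ = \sum_(v in [set: T]) sgv (f v)); last by apply: eq_bigl => v; rewrite inE.
  rewrite (big_setID P) /= setTI.
  rewrite (eq_bigr (fun _ => 1)); last by move=> u; rewrite !inE => ->.
  rewrite [X in (_ + X)%R](eq_bigr (fun _ => -1)); last first.
    by move=> u; rewrite !inE => /andP[nP _]; rewrite /sgv (negbTE nP).
  by rewrite !sumr_const setTD mulNrn !natz.
have Ei : forall k : nat, (k%:Z)%:~R = k%:R :> R by [].
rewrite W cT rmorphB /= !Ei natrD.
apply: real_part.
- by rewrite ler_nat.
- by rewrite ler1n.
- exact: ler0n.
- exact: ler0n.
move: K; rewrite -(ler_nat R) !natrM !natrD !natrM natrB; last by apply: leq_trans r2.
by rewrite expr2.

Qed.
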